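(* Let $(A,B,R)$ be a normalized formal context and $(X,Y)\in\mathcal{C}_N$. If $X^{\uparrow}\neq\varnothing$, then $X^{\uparrow\downarrow}=X$, i.e. $\langle X,X^{\uparrow}\rangle$ is a formal concept of $(A,B,R)$.
   Context: A formal context is a triple $(A,B,R)$ with $R\subseteq A\times B$. Derivation operators: $X^{\uparrow}=\{a\in A\mid (a,b)\in R \text{ for all } b\in X\}$ for $X\subseteq B$ and $Y^{\downarrow}=\{b\in B\mid (a,b)\in R \text{ for all } a\in Y\}$ for $Y\subseteq A$; a formal concept is a pair $\langle X,Y\rangle$ with $X^\uparrow=Y$, $Y^\downarrow=X$. Necessity operators: $X^{\uparrow_N}=\{a\in A\mid \text{for all } b\in B,\ (a,b)\in R\Rightarrow b\in X\}$ and $Y^{\downarrow^N}=\{b\in B\mid \text{for all } a\in A,\ (a,b)\in R\Rightarrow a\in Y\}$. $\mathcal{C}_N=\{(X,Y)\mid X\subseteq B,\ Y\subseteq A,\ X^{\uparrow_N}=Y,\ Y^{\downarrow^N}=X\}$. The context is normalized if for every $a\in A$ there are $b,b'\in B$ with $(a,b)\in R$, $(a,b')\notin R$, and for every $b\in B$ there are $a,a'\in A$ with $(a,b)\in R$, $(a',b)\notin R$. *)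

(* Defs.v *)
Section Contexts.
Context {A B : Type} (R : A -> B -> Prop).

Definition up (X : B -> Prop) : A -> Prop :=
  fun a => forall b, X b -> R a b.

Definition down (Y : A -> Prop) : B -> Prop :=
  fun b => forall a, Y a -> R a b.

Definition upN (X : B -> Prop) : A -> Prop :=
  fun a => forall b, R a b -> X b.

Definition downN (Y : A -> Prop) : B -> Prop :=
  fun b => forall a, R a b -> Y a.

Definition in_CN (X : B -> Prop) (Y : A -> Prop) : Prop :=
  upN X = Y /\ downN Y = X.

Definition formal_concept (X : B -> Prop) (Y : A -> Prop) : Prop :=
  up X = Y /\ down Y = X.

Definition normalized : Prop :=
  (forall a, exists b b', R a b /\ ~ R a b') /\
  (forall b, exists a a', R a b /\ ~ R a' b).

Definition nonempty {T : Type} (S : T -> Prop) : Prop := exists t, S t.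

End Contexts.

(* Main.v *)
Require Import Defs.
From Stdlib Require Import Classical FunctionalExtensionality PropExtensionality.

Theorem mainTheorem5 (A B : Type) (R : A -> B -> Prop)
  (X : B -> Prop) (Y : A -> Prop) :
  normalized R ->
  in_CN R X Y ->
  nonempty (up R X) ->
  down R (up R X) = X /\ formal_concept R X (up R X).
Proof.
  intros [_ HnB] [HY HX] [a0 Ha0].
  assert (E : down R (up R X) = X).
  { apply functional_extensionality; intro b.
    apply propositional_extensionality; split.
    - intro Hb.
      destruct (classic (exists x, X x)) as [[x Hx]|Hne].
      + assert (HYa0 : Y a0).
        { pose proof Hx as Hx'. rewrite <- HX in Hx'. apply Hx'. apply Ha0. exact Hx. }
        rewrite <- HY in HYa0. apply HYa0. apply Hb. exact Ha0.
      + exfalso. destruct (HnB b) as [a [a' [_ Hn]]]. apply Hn. apply Hb.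
        intros b' Hb'. exfalso. apply Hne. exists b'. exact Hb'.
    - intros Hb a Ha. apply Ha. exact Hb. }
  split; [exact E | split; [reflexivity | exact E]].
Qed.
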